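(* Let $k \geq 2$ be an integer. Suppose that, for each $k$-admissible integer $n \geq 2k$, every non-reducible partial $k$-star design of order $n$ with at most $u(n,k)$ stars is completable. Then, for each $k$-admissible integer $n \geq 2k$, every partial $k$-star design of order $n$ with at most $u(n,k)$ stars is completable.
   Context: A $k$-star is a copy of $K_{1,k}$; its vertex of degree $k$ is the centre and the others are leaves. A partial $k$-star design of order $n$ is a pair $(V,\mathcal{A})$ where $V$ is a set of $n$ vertices and $\mathcal{A}$ is a set of edge-disjoint $k$-stars that are subgraphs of the complete graph $K_V$; it is completable if there is a set $\mathcal{B}\supseteq\mathcal{A}$ of edge-disjoint $k$-stars in $K_V$ covering all edges of $K_V$. A positive integer $n$ is $k$-admissible if $\binom{n}{2}\equiv 0 \pmod{k}$. Here \[u(n,k)= \begin{cases} 2 \lfloor \frac{n-2}{k} \rfloor-1 & \text{if $n \not \equiv 1\pmod{k}$},\\ \frac{2(n-1)}{k} - 2 & \text{if $n \equiv 1\pmod{k}$.} \end{cases} \] A partial $k$-star design $(V,\mathcal{A})$ of order $n$ is reducible if $n \equiv 1 \pmod{k}$, $|\mathcal{A}|=u(n,k)$, and there is a vertex which is the centre of at least one star in $\mathcal{A}$ and is not a leaf of any star in $\mathcal{A}$; otherwise it is non-reducible. *)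

(* Defs.v *)
From mathcomp Require Import all_boot.
Set Implicit Arguments. Unset Strict Implicit. Unset Printing Implicit Defensive.

(* Vertex set V = 'I_n (any n-set is isomorphic to it).
   A k-star is given by its centre c and its leaf set L, with c \notin L and #|L| = k. *)
Definition star (n : nat) := ('I_n * {set 'I_n})%type.

Definition centre n (s : star n) : 'I_n := s.1.
Definition leaves n (s : star n) : {set 'I_n} := s.2.

Definition is_kstar (k n : nat) (s : star n) : bool :=
  (centre s \notin leaves s) && (#|leaves s| == k).

Definition star_edges n (s : star n) : {set {set 'I_n}} :=
  [set [set centre s; l] | l in leaves s].

Definition is_edge n (e : {set 'I_n}) : bool := #|e| == 2.

Definition edge_disjoint_kstars (k n : nat) (A : {set star n}) : Prop :=
  (forall s, s \in A -> is_kstar k s) /\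
  (forall s t, s \in A -> t \in A -> s != t ->
     [disjoint star_edges s & star_edges t]).

Definition partial_star_design (k n : nat) (A : {set star n}) : Prop :=
  edge_disjoint_kstars k A.

Definition completable (k n : nat) (A : {set star n}) : Prop :=
  exists B : {set star n}, [/\ A \subset B, edge_disjoint_kstars k B &
    forall e : {set 'I_n}, is_edge e -> exists2 s, s \in B & e \in star_edges s].

Definition admissible (k n : nat) : bool := k %| 'C(n, 2).

Definition u (n k : nat) : nat :=
  if n %% k != 1 %% k then (2 * ((n - 2) %/ k)) - 1
  else (2 * (n - 1)) %/ k - 2.

Definition reducible (k n : nat) (A : {set star n}) : Prop :=
  [/\ n = 1 %[mod k], #|A| = u n k &
      exists v : 'I_n, (exists2 s, s \in A & centre s = v) /\
                       (forall s, s \in A -> v \notin leaves s)].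

(* Main.v *)
Require Import Defs.
From mathcomp Require Import all_boot zify.
From Stdlib Require Classical_Prop.
Set Implicit Arguments. Unset Strict Implicit. Unset Printing Implicit Defensive.

Lemma partition_k (T : finType) k j (R : {set T}) : #|R| = j * k ->
 exists P : {set {set T}}, [/\ forall L, L \in P -> #|L| = k,
   forall L1 L2, L1 \in P -> L2 \in P -> L1 != L2 -> [disjoint L1 & L2],
   forall x, x \in R -> exists2 L, L \in P & x \in L &
   forall L, L \in P -> L \subset R].
Proof.
elim: j R => [|j IH] R hR.
  have R0 : R = set0 by apply/eqP; rewrite -cards_eq0 hR.
  exists set0; split.
  - by move=> L; rewrite inE.
  - by move=> L; rewrite inE.
  - by move=> x; rewrite R0 inE.
  - by move=> L; rewrite inE.
set S := [set x in take k (enum R)].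
have SR : S \subset R.
  by apply/subsetP => x; rewrite inE => /mem_take; rewrite mem_enum.
have cS : #|S| = k.
  rewrite cardsE (card_uniqP _) ?take_uniq ?enum_uniq // size_takel //.
  by rewrite -cardE hR; lia.
have hR' : #|R :\: S| = j * k.
  by rewrite cardsD (setIidPr SR) cS hR; lia.
have [P' [P1 P2 P3 P4]] := IH _ hR'.
exists (S |: P'); split.
- by move=> L; move/setU1P => [->|]; [|apply: P1].
- have dS : forall L, L \in P' -> [disjoint S & L].
    move=> L /P4 LR; apply: disjointWr LR _.
    by rewrite disjoints_subset setDE setCI setCK subsetUr.
  move=> L1 L2; move/setU1P => [->|h1] /setU1P [->|h2] ne.
  + by rewrite eqxx in ne.
  + exact: dS.
  + by rewrite disjoint_sym; apply: dS.
  + exact: P2.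
- move=> x xR; have [xS|xS] := boolP (x \in S).
    by exists S => //; rewrite setU11.
  have [|L LP xL] := P3 x; first by rewrite inE xS.
  by exists L => //; rewrite inE LP orbT.
- move=> L; move/setU1P => [->|/P4 h] //.
  by apply: subset_trans h (subsetDl _ _).
Qed.

Lemma disjI (T : finType) (A B : {set T}) :
  (forall x, x \in A -> x \in B -> False) -> [disjoint A & B].
Proof.
move=> h; rewrite disjoints_subset; apply/subsetP => x xA; rewrite inE.
by apply/negP => /(h x xA).
Qed.

Lemma disjE (T : finType) (A B : {set T}) x :
  [disjoint A & B] -> x \in A -> x \in B -> False.
Proof.
rewrite disjoints_subset => /subsetP h /h; rewrite inE => /negP; exact.
Qed.

Lemma star_edgesP n (s : star n) e :
  reflect (exists2 l, l \in leaves s & e = [set centre s; l]) (e \in star_edges s).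
Proof. exact: imsetP. Qed.

Lemma set2_inj (T : finType) (c l l' : T) :
  l != c -> [set c; l] = [set c; l'] -> l = l'.
Proof.
move=> lc E; have : l \in [set c; l'] by rewrite -E set22.
by rewrite in_set2 (negbTE lc) /= => /eqP.
Qed.

Lemma vstar_disj n (s t : star n) : centre s = centre t ->
  centre s \notin leaves s -> centre t \notin leaves t ->
  [disjoint leaves s & leaves t] -> [disjoint star_edges s & star_edges t].
Proof.
move=> ct cs ctt d; apply: disjI => e /star_edgesP [l ls ->] /star_edgesP [l' lt].
rewrite -ct => E; have ll' := set2_inj _ E.
have lc : l != centre s by apply: contraNneq cs => <-.
by move: (ll' lc) => eq; subst l'; apply: (disjE d ls lt).
Qed.

Definition smap m (v : 'I_m.+1) (s : star m) : star m.+1 :=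
  (lift v (centre s), lift v @: leaves s).

Lemma imset_pair (aT rT : finType) (f : aT -> rT) a b : f @: [set a; b] = [set f a; f b].
Proof. by rewrite imsetU1 imset_set1. Qed.

Lemma smap_edges m (v : 'I_m.+1) (s : star m) e :
  e \in star_edges s -> lift v @: e \in star_edges (smap v s).
Proof.
move=> /star_edgesP [l ls ->]; apply/star_edgesP; exists (lift v l).
  by rewrite /smap /leaves /= mem_imset //; apply: lift_inj.
by rewrite imset_pair.
Qed.

Lemma smap_edges_inv m (v : 'I_m.+1) (s : star m) e :
  e \in star_edges (smap v s) -> exists2 e', e' \in star_edges s & e = lift v @: e'.
Proof.
move=> /star_edgesP [l /imsetP [l' l's ->] ->].
exists [set centre s; l']; first by apply/star_edgesP; exists l'.
by rewrite imset_pair.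
Qed.

Lemma smap_nov m (v : 'I_m.+1) (s : star m) e :
  e \in star_edges (smap v s) -> v \notin e.
Proof.
move=> /smap_edges_inv [e' _ ->]; apply/negP => /imsetP [x _ ex].
by move/eqP: (neq_lift v x); apply.
Qed.

Lemma smap_inj m (v : 'I_m.+1) : injective (smap v).
Proof.
move=> [c L] [c' L']; rewrite /smap /centre /leaves /= => E.
have E1 := congr1 fst E. have E2 := congr1 snd E. simpl in E1, E2.
by rewrite (lift_inj E1) (imset_inj (@lift_inj _ v) E2).
Qed.

Lemma smap_kstar k m (v : 'I_m.+1) (s : star m) :
  is_kstar k (smap v s) = is_kstar k s.
Proof.
rewrite /is_kstar /smap /centre /leaves /= mem_imset; last exact: lift_inj.
by rewrite card_imset //; apply: lift_inj.
Qed.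

Lemma arith k m : 2 <= k -> 2 * k <= m.+1 -> m.+1 = 1 %[mod k] ->
  exists j, [/\ m = j * k, 2 <= j, u m k = 2 * j - 3 & u m.+1 k = 2 * j - 2].
Proof.
move=> k2 km hm.
have mk : m %% k = 0.
  have : (m + 1 == 0 + 1 %[mod k]) by rewrite addn1 add0n hm.
  by rewrite eqn_modDr mod0n => /eqP.
have /dvdnP [j mj] : k %| m by rewrite /dvdn mk.
have j2 : 2 <= j by subst m; nia.
exists j; split => //.
- rewrite /u mk modn_small //=.
  have -> : m - 2 = (j - 1) * k + (k - 2) by subst m; rewrite mulnBl mul1n; nia.
  rewrite divnMDl ?divn_small; lia.
- rewrite /u hm eqxx /= subn1 /= mj mulnA mulnK; lia.
Qed.

Lemma reduce k m (A : {set star m.+1}) (v : 'I_m.+1) :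
  2 <= k ->
  (forall n : nat, admissible k n -> 2 * k <= n ->
     forall A : {set star n}, partial_star_design k A -> ~ reducible k A ->
       #|A| <= u n k -> completable k A) ->
  admissible k m.+1 -> 2 * k <= m.+1 -> partial_star_design k A ->
  m.+1 = 1 %[mod k] -> #|A| <= u m.+1 k ->
  (exists2 s, s \in A & centre s = v) -> (forall s, s \in A -> v \notin leaves s) ->
  completable k A.
Proof.
move=> k2 H adm km [Ak Ad] hm hA [s0 s0A s0v] hv.
have [j [mj j2 um un]] := arith k2 km hm.
set A' := [set s : star m | smap v s \in A].
have Aoff : forall s, s \in A -> centre s != v -> exists2 t, t \in A' & s = smap v t.
  move=> [c L] sA cv; rewrite /centre /= eq_sym in cv.
  have vL : v \notin L := hv _ sA.
  have [c' cc' _] := unlift_some cv.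
  have E : (c, L) = smap v (c', [set y | lift v y \in L]).
    rewrite /smap /centre /leaves /= -cc'; congr pair.
    apply/setP => x; case: (unliftP v x) => [y ->|->].
      by rewrite mem_imset ?inE //; apply: lift_inj.
    rewrite (negbTE vL); apply/esym/negP => /imsetP [y _] /eqP.
    by rewrite (negbTE (neq_lift v y)).
  by exists (c', [set y | lift v y \in L]) => //; rewrite inE -E.
have A'k : forall t, t \in A' -> is_kstar k t.
  by move=> t; rewrite inE => /Ak; rewrite smap_kstar.
have A'd : forall s t, s \in A' -> t \in A' -> s != t ->
    [disjoint star_edges s & star_edges t].
  move=> s t; rewrite !inE => sA tA st; apply: disjI => e es et.
  have st' : smap v s != smap v t by apply: contra st => /eqP /smap_inj ->.
  exact: disjE (Ad _ _ sA tA st') (smap_edges v es) (smap_edges v et).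
have cA' : #|A'| <= u m k.
  have sub : smap v @: A' \subset A :\ s0.
    apply/subsetP => x /imsetP [t]; rewrite inE => tA ->; rewrite !inE tA andbT.
    apply/negP => /eqP E.
    have h : centre (smap v t) = v by rewrite E.
    by move/eqP: (neq_lift v (centre t)) => /(_ (esym h)).
  have := subset_leq_card sub; rewrite card_imset; last exact: smap_inj.
  have := cardsD1 s0 A; rewrite s0A add1n => cD c1.
  rewrite um; apply: (leq_trans c1); move: hA; rewrite un cD => h; rewrite -ltnS; apply: leq_trans h _; lia.
have km' : k %| m by rewrite mj dvdn_mull.
have admm : admissible k m by move: adm; rewrite /admissible binS bin1 dvdn_addl.
have km2 : 2 * k <= m by rewrite mj; nia.
have nred : ~ reducible k A'.
  case=> hm' _ _; move: hm'; rewrite mj modnMl modn_small //.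
have [B' [A'B' [B'k B'd] B'c]] := H m admm km2 A' (conj A'k A'd) nred cA'.
set Av := [set s in A | centre s == v].
set LV := [set leaves s | s in Av].
have triv : trivIset LV.
  apply/trivIsetP => L1 L2 /imsetP [s sV ->] /imsetP [t tV ->] ne.
  rewrite !inE in sV tV; case/andP: sV => sA /eqP sv; case/andP: tV => tA /eqP tv.
  have st : s != t by apply: contra ne => /eqP ->.
  apply: disjI => l ls lt.
  apply: (disjE (x := [set v; l]) (Ad _ _ sA tA st)).
    by apply/star_edgesP; exists l; rewrite ?sv.
  by apply/star_edgesP; exists l; rewrite ?tv.
set U := cover LV.
have cU : #|U| = #|LV| * k.
  rewrite /U -(eqP triv) -sum_nat_const; apply: eq_bigr => L /imsetP [s sV ->].
  by move: sV; rewrite inE => /andP [/Ak /andP [_ /eqP]].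
have vU : v \notin U.
  apply/negP => /bigcupP [L /imsetP [s sV ->] vL].
  by rewrite inE in sV; case/andP: sV => sA _; move: (hv _ sA); rewrite vL.
set R := ~: (v |: U).
have cR : #|R| = (j - #|LV|) * k.
  rewrite /R cardsCs setCK cardsU1 vU cU card_ord mulnBl -mj; lia.
have [P [P1 P2 P3 P4]] := partition_k cR.
set Pv := [set ((v, L) : star m.+1) | L in P].
have vR : forall L, L \in P -> v \notin L.
  by move=> L LP; apply/negP => vL; move: (subsetP (P4 _ LP) _ vL); rewrite !inE eqxx.
have cv : forall s, s \in Av :|: Pv -> centre s = v.
  move=> s /setUP [|/imsetP [L _ ->] //]; by rewrite inE => /andP [_ /eqP].
have ev : forall s e, centre s = v -> e \in star_edges s -> v \in e.
  by move=> s e sv /star_edgesP [l _ ->]; rewrite sv set21.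
have h11 : forall a b, a \in B' -> b \in B' -> a != b ->
    [disjoint star_edges (smap v a) & star_edges (smap v b)].
  move=> a b aB bB ab; apply: disjI => e /smap_edges_inv [e1 e1a ->].
  move=> /smap_edges_inv [e2 e2b /(imset_inj (@lift_inj _ v)) E].
  by subst e2; apply: disjE (B'd _ _ aB bB ab) e1a e2b.
have h1v : forall a s, centre s = v ->
    [disjoint star_edges (smap v a) & star_edges s].
  move=> a s sv; apply: disjI => e ea es.
  by move: (smap_nov ea); rewrite (ev _ _ sv es).
have hAP : forall s L, s \in Av -> L \in P ->
    [disjoint star_edges s & star_edges ((v, L) : star m.+1)].
  move=> s L sV LP; have := sV; rewrite inE => /andP [sA /eqP sv].
  apply: vstar_disj => //; first by rewrite sv; apply: hv.
  - exact: vR.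
  apply: disjI => l ls lL.
  have lU : l \in U by apply/bigcupP; exists (leaves s) => //; apply: imset_f.
  by move: (subsetP (P4 _ LP) _ lL); rewrite !inE lU orbT.
have hPP : forall L1 L2, L1 \in P -> L2 \in P -> L1 != L2 ->
    [disjoint star_edges ((v, L1) : star m.+1) & star_edges ((v, L2) : star m.+1)].
  move=> L1 L2 h1 h2 ne; apply: vstar_disj => //; try exact: vR.
  exact: P2.
exists (smap v @: B' :|: Av :|: Pv); split.
- apply/subsetP => s sA; case: (eqVneq (centre s) v) => sv.
    by apply/setUP; left; apply/setUP; right; rewrite inE sA sv eqxx.
  have [t tA' ->] := Aoff s sA sv.
  by apply/setUP; left; apply/setUP; left; apply: imset_f; apply: (subsetP A'B').
- split.
  + move=> s /setUP [/setUP [/imsetP [t tB ->]|]|].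
    * by rewrite smap_kstar; apply: B'k.
    * by rewrite inE => /andP [sA _]; apply: Ak.
    * move=> /imsetP [L LP ->]; rewrite /is_kstar /centre /leaves /= P1 // eqxx andbT.
      exact: vR.
  + move=> s t; rewrite -setUA => /setUP [/imsetP [a aB ->]|sV] /setUP [/imsetP [b bB ->]|tV] st.
    * by apply: h11 => //; apply: contra st => /eqP ->.
    * exact: h1v (cv _ tV).
    * by rewrite disjoint_sym; apply: h1v (cv _ sV).
    * move: st; case/setUP: sV => [sV|/imsetP [L1 L1P ->]]; case/setUP: tV => [tV|/imsetP [L2 L2P ->]] => st.
      - by rewrite !inE in sV tV; case/andP: sV => sA _; case/andP: tV => tA _; apply: Ad.
      - exact: hAP.
      - by rewrite disjoint_sym; apply: hAP.
      - by apply: hPP => //; apply/negP => /eqP E; move: st; rewrite E eqxx.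
- move=> e /cards2P [x [y [xy ->]]].
  case: (boolP (v \in [set x; y])) => ve.
    have [w wv ew] : exists2 w, w != v & [set x; y] = [set v; w].
      rewrite in_set2 in ve; case/orP: ve => /eqP ev'; subst.
        by exists y; rewrite // eq_sym.
      by exists x => //; rewrite setUC.
    rewrite ew; case: (boolP (w \in U)) => wU.
      have /bigcupP [L /imsetP [s sV ->] wL] := wU.
      exists s; first by apply/setUP; left; apply/setUP; right.
      apply/star_edgesP; exists w => //; move: sV; rewrite inE => /andP [_ /eqP ->] //.
    have wR : w \in R by rewrite !inE negb_or wv wU.
    have [L LP wL] := P3 _ wR.
    exists ((v, L) : star m.+1); first by apply/setUP; right; apply: imset_f.
    by apply/star_edgesP; exists w.
  rewrite in_set2 negb_or in ve; case/andP: ve => vx vy.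
  have [x' ex _] := unlift_some vx.
  have [y' ey _] := unlift_some vy.
  subst x y.
  have xy' : x' != y' by apply: contra xy => /eqP ->.
  have e2 : is_edge [set x'; y'] by rewrite /is_edge cards2 xy'.
  have [t tB et] := B'c [set x'; y'] e2.
  exists (smap v t); first by apply/setUP; left; apply/setUP; left; apply: imset_f.
  by have := smap_edges v et; rewrite imset_pair.
Qed.

Theorem lemma7 (k : nat) : 2 <= k ->
  (forall n : nat, admissible k n -> 2 * k <= n ->
     forall A : {set star n}, partial_star_design k A -> ~ reducible k A ->
       #|A| <= u n k -> completable k A) ->
  forall n : nat, admissible k n -> 2 * k <= n ->
    forall A : {set star n}, partial_star_design k A ->
      #|A| <= u n k -> completable k A.
Proof.
move=> k2 H n adm kn A pA hA.
case: (Classical_Prop.classic (reducible k A)) => red; last exact: H.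
case: red => hm _ [v [[s sA sv] hv]].
case: n adm kn A pA hA hm v s sA sv hv => [|m] adm kn A pA hA hm v s sA sv hv.
  by move: kn; lia.
apply: (reduce (v := v)) => //; by exists s.
Qed.
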